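(* Let $n \ge 19$. Let $H$ be a red-blue colouring of $K_n$ satisfying $\mathrm{pack}(H) \le n(n-1)/4$. Suppose that $\{X_1, X_2\}$ is a bipartition of $V(H)$ such that the number $k$ of blue edges with both ends in $X_1$ or both ends in $X_2$ satisfies $k \le n/8$. Then (a) $|X_i| \ge k + 4$ for $i \in [2]$, and (b) $|X_i| \ge 7$ for $i \in [2]$.
   Context: A red-blue colouring $H$ of $K_n$ assigns red or blue to each edge of the complete graph on the $n$-vertex set $V(H)$; $H_R, H_B$ are the spanning subgraphs of red and blue edges. For a graph $F$, a fractional triangle packing is a function $\omega$ from the triangles of $F$ to $[0,1]$ with $\sum_{T \ni e}\omega(T) \le 1$ for every edge $e$; $\nu^*(F)$ is the maximum of $\sum_T\omega(T)$; $\mathrm{pack}(H) = 3(\nu^*(H_R)+\nu^*(H_B))$. *)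

(* Defs.v *)
From HB Require Import structures.
From mathcomp Require Import all_boot all_order all_algebra.
From mathcomp Require Import classical_sets reals.
Set Implicit Arguments. Unset Strict Implicit. Unset Printing Implicit Defensive.
Import Order.TTheory GRing.Theory Num.Theory.
Local Open Scope ring_scope.
Local Open Scope classical_set_scope.

(* Vertices are 'I_n; an edge is a 2-element subset of 'I_n.
   A graph F on 'I_n is given by its edge set E : {set {set 'I_n}}. *)

Definition is_edge (n : nat) (e : {set 'I_n}) : bool := #|e| == 2%N.

Definition is_triangle (n : nat) (E : {set {set 'I_n}}) (T : {set 'I_n}) : bool :=
  (#|T| == 3%N) && [forall e : {set 'I_n}, (e \subset T) && is_edge e ==> (e \in E)].

Definition frac_tri_packing (R : realType) (n : nat) (E : {set {set 'I_n}})
    (w : {set 'I_n} -> R) : Prop :=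
  (forall T, is_triangle E T -> 0 <= w T <= 1) /\
  (forall e, e \in E -> \sum_(T | is_triangle E T && (e \subset T)) w T <= 1).

Definition packing_value (R : realType) (n : nat) (E : {set {set 'I_n}})
    (w : {set 'I_n} -> R) : R :=
  \sum_(T | is_triangle E T) w T.

(* nu^*(F): maximum (= supremum, the LP being bounded and feasible) *)
Definition nu_star (R : realType) (n : nat) (E : {set {set 'I_n}}) : R :=
  sup [set x : R | exists w : {set 'I_n} -> R,
                     frac_tri_packing E w /\ x = packing_value E w].

Definition red_edges (n : nat) (col : {set 'I_n} -> bool) : {set {set 'I_n}} :=
  [set e | is_edge e && col e].
Definition blue_edges (n : nat) (col : {set 'I_n} -> bool) : {set {set 'I_n}} :=
  [set e | is_edge e && ~~ col e].

Definition pack (R : realType) (n : nat) (col : {set 'I_n} -> bool) : R :=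
  3%:R * (nu_star R (red_edges col) + nu_star R (blue_edges col)).

Definition blue_inside (n : nat) (col : {set 'I_n} -> bool) (X1 X2 : {set 'I_n}) : nat :=
  #|[set e in blue_edges col | (e \subset X1) || (e \subset X2)]|.

(* Main.v *)
Require Import Defs.
From HB Require Import structures.
From mathcomp Require Import all_boot all_order all_algebra.
From mathcomp Require Import classical_sets reals.
From mathcomp Require Import zify ring lra.
Import Order.TTheory GRing.Theory Num.Theory.
Local Open Scope ring_scope.
Set Implicit Arguments.

Lemma Sx_card n (X e : {set 'I_n}) : #|e| = 2%N ->
  (#|[set T : {set 'I_n} | [&& T \subset X, #|T| == 3%N & e \subset T]]| <= #|X| - 2)%N.
Proof.
move=> he.
case: (boolP (e \subset X)) => heX; last first.
  rewrite (_ : [set T | _] = finset.set0) ?cards0 //.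
  apply/finset.setP => T; rewrite !inE; apply/negbTE; apply/negP => /and3P[TX _ eT].
  by rewrite (fintype.subset_trans eT TX) in heX.
have -> : (#|X| - 2 = #|X :\: e|)%N by rewrite cardsD (finset.setIidPr heX) he.
apply: leq_trans (leq_imset_card (fun x => x |: e) (X :\: e)).
apply: subset_leq_card; apply/fintype.subsetP => T; rewrite inE => /and3P[TX /eqP T3 eT].
have: #|T :\: e| = 1%N by rewrite cardsD (finset.setIidPr eT) T3 he.
move/eqP/cards1P => [x hx].
apply/imsetP; exists x.
  have: x \in T :\: e by rewrite hx set11.
  by rewrite !inE => /andP[-> /(fintype.subsetP TX) ->].
rewrite -hx; apply/finset.setP => y; rewrite !inE.
by case: (boolP (y \in e)) => hy; rewrite ?orbT ?orbF ?(fintype.subsetP eT _ hy) ?andTb ?andFb ?orbF ?orbT.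
Qed.

Lemma count_tri n (col : {set 'I_n} -> bool) (X : {set 'I_n}) :
  ('C(#|X|, 3) <= #|[set T | is_triangle (red_edges col) T && (T \subset X)]|
     + #|[set e in blue_edges col | e \subset X]| * (#|X| - 2))%N.
Proof.
rewrite -cards_draws.
set RT := [set T | _ && _]. set B := [set e in _ | _].
pose Sx := fun e : {set 'I_n} => [set T : {set 'I_n} | [&& T \subset X, #|T| == 3%N & e \subset T]].
have sub : [set A : {set 'I_n} | A \subset X & #|A| == 3%N] \subset RT :|: \bigcup_(e in B) Sx e.
  apply/fintype.subsetP => T; rewrite inE => /andP[TX T3]; rewrite inE.
  case: (boolP (is_triangle (red_edges col) T)) => ht; first by rewrite inE ht TX.
  apply/orP; right.
  move: ht; rewrite /is_triangle T3 /= negb_forall => /existsP[e].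
  rewrite negb_imply => /andP[/andP[eT ee] eR].
  apply/bigcupP; exists e.
    rewrite !inE ee /= (fintype.subset_trans eT TX) andbT.
    by move: eR; rewrite inE ee.
  by rewrite inE TX T3 eT.
apply: leq_trans (subset_leq_card sub) _.
rewrite cardsU; apply: leq_trans (leq_subr _ _) _.
rewrite leq_add2l.
have hU : (#|\bigcup_(e in B) Sx e| <= \sum_(e in B) #|Sx e|)%N.
  apply: (@big_ind2 _ _ (fun (A : {set {set 'I_n}}) (m : nat) => #|A| <= m)%N); first by rewrite cards0.
  move=> A1 m1 A2 m2 h1 h2; rewrite cardsU; apply: leq_trans (leq_subr _ _) _.
  exact: leq_add.
  by [].
apply: leq_trans hU _.
rewrite -sum_nat_const; apply: leq_sum => e; rewrite !inE => /andP[/andP[/eqP ee _] _].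
exact: Sx_card.
Qed.

Lemma nu_ge (R : realType) n (E : {set {set 'I_n}}) (w : {set 'I_n} -> R) :
  frac_tri_packing E w -> packing_value E w <= nu_star R E.
Proof.
move=> hw.
have hub : has_ubound [set x : R | exists w : {set 'I_n} -> R,
                     frac_tri_packing E w /\ x = packing_value E w].
  exists (#|[set T | is_triangle E T]|%:R) => x [w' [[h1 _] ->]].
  rewrite /packing_value -sum1dep_card natr_sum; apply: ler_sum => T hT.
  by case/andP: (h1 T hT).
by apply: (ub_le_sup hub); exists w.
Qed.

Lemma frac_le1 (R : realType) (a c : nat) : (a <= c)%N -> a%:R / c%:R <= 1 :> R.
Proof.
case: c => [|c] h; first by rewrite invr0 mulr0 ler01.
by rewrite ler_pdivrMr ?ltr0Sn // mul1r ler_nat.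
Qed.

Lemma sum_ind (R : realType) n (P Q : pred {set 'I_n}) :
  \sum_(T | P T) (Q T)%:R = #|[set T | P T && Q T]|%:R :> R.
Proof.
rewrite -sum1dep_card big_mkcondr natr_sum; apply: eq_bigr => T _.
by case: (Q T).
Qed.

Definition wgt (R : realType) n (X1 X2 : {set 'I_n}) : {set 'I_n} -> R :=
  fun T => (T \subset X1)%:R / (#|X1| - 2)%:R + (T \subset X2)%:R / (#|X2| - 2)%:R.

Lemma disj_sub n (X1 X2 S : {set 'I_n}) : X1 :&: X2 = finset.set0 ->
  (0 < #|S|)%N -> S \subset X1 -> S \subset X2 -> False.
Proof.
move=> hI hS h1 h2.
have : S \subset X1 :&: X2 by rewrite finset.subsetI h1 h2.
rewrite hI finset.subset0 => /eqP hS0.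
by rewrite hS0 cards0 in hS.
Qed.

Lemma cnt_le n (E : {set {set 'I_n}}) (X e : {set 'I_n}) : #|e| = 2%N ->
  (#|[set T | is_triangle E T && (e \subset T) && (T \subset X)]| <= #|X| - 2)%N.
Proof.
move=> he; apply: leq_trans (Sx_card X he).
apply: subset_leq_card; apply/fintype.subsetP => T; rewrite !inE.
by case/andP => /andP[/andP[-> _] ->] ->.
Qed.

Lemma cnt0 n (E : {set {set 'I_n}}) (X e : {set 'I_n}) : ~~ (e \subset X) ->
  #|[set T | is_triangle E T && (e \subset T) && (T \subset X)]| = 0%N.
Proof.
move=> he; apply/eqP; rewrite cards_eq0; apply/eqP/finset.setP => T; rewrite !inE.
apply/negbTE; apply/negP => /andP[/andP[_ eT] TX].
by rewrite (fintype.subset_trans eT TX) in he.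
Qed.

Lemma wgt_pack (R : realType) n (col : {set 'I_n} -> bool) (X1 X2 : {set 'I_n}) :
  X1 :&: X2 = finset.set0 -> frac_tri_packing (red_edges col) (wgt R X1 X2).
Proof.
move=> hI; split.
  move=> T /andP[/eqP T3 _]; rewrite /wgt; apply/andP; split.
    by apply: addr_ge0; apply: divr_ge0; rewrite ler0n.
  case: (boolP (T \subset X1)) => h1.
    have h2 : ~~ (T \subset X2) by apply/negP => h2; apply: (disj_sub hI _ h1 h2); rewrite T3.
    rewrite (negbTE h2) mul0r addr0; apply: frac_le1.
    by have := subset_leq_card h1; rewrite T3; case: (#|X1|) => // [[|[|[|m]]]].
  rewrite mul0r add0r; case: (boolP (T \subset X2)) => h2; last by rewrite mul0r ler01.
  apply: frac_le1.
  by have := subset_leq_card h2; rewrite T3; case: (#|X2|) => // [[|[|[|m]]]].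
move=> e; rewrite inE => /andP[/eqP he _].
rewrite /wgt big_split /= -!mulr_suml !sum_ind.
case: (boolP (e \subset X1)) => h1.
  have h2 : ~~ (e \subset X2) by apply/negP => h2; apply: (disj_sub hI _ h1 h2); rewrite he.
  rewrite (cnt0 (red_edges col) _ _ h2) mul0r addr0; apply: frac_le1; exact: cnt_le.
rewrite (cnt0 (red_edges col) _ _ h1) mul0r add0r; apply: frac_le1; exact: cnt_le.
Qed.

Lemma wgt_val (R : realType) n (E : {set {set 'I_n}}) (X1 X2 : {set 'I_n}) :
  packing_value E (wgt R X1 X2) =
    #|[set T | is_triangle E T && (T \subset X1)]|%:R / (#|X1| - 2)%:R +
    #|[set T | is_triangle E T && (T \subset X2)]|%:R / (#|X2| - 2)%:R.
Proof. by rewrite /packing_value /wgt big_split /= -!mulr_suml !sum_ind. Qed.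

Lemma aux (R: realType) (h c N K: R) : 0 < c -> h * c <= 12 * N + K * c -> h <= 12 * (N / c) + K.
Proof.
move=> hc hh.
have -> : 12 * (N / c) + K = (12 * N + K * c) / c by field; rewrite gt_eqF.
by rewrite ler_pdivlMr.
Qed.

Definition Hm (m : nat) : nat := if (3 <= m)%N then (2 * m * (m - 1))%N else 0%N.

Lemma part_bound (R : realType) n (col : {set 'I_n} -> bool) (X : {set 'I_n}) :
  (Hm #|X|)%:R <= 12 * (#|[set T | is_triangle (red_edges col) T && (T \subset X)]|%:R
      / (#|X| - 2)%:R) + (12 * #|[set e in blue_edges col | e \subset X]|)%:R :> R.
Proof.
have hc := count_tri col X.
move: hc; rewrite /Hm.
set N := #|[set T | _ && _]|; set k := #|[set e in _ | _]|.
case: #|X| => [|[|[|p]]] hc /=.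
- by rewrite addr_ge0 // mulr_ge0 // divr_ge0.
- by rewrite addr_ge0 // mulr_ge0 // divr_ge0.
- by rewrite addr_ge0 // mulr_ge0 // divr_ge0.
have e6 : ('C(p.+3, 3) * 6 = p.+3 * p.+2 * p.+1)%N.
  by rewrite (bin_ffact p.+3 3) /= !ffactnS ffactn0 muln1 mulnA.
have hn : (2 * p.+3 * (p.+3 - 1) * (p.+3 - 2) <= 12 * N + 12 * k * (p.+3 - 2))%N.
  have s2 : (p.+3 - 2 = p.+1)%N by []. have s1 : (p.+3 - 1 = p.+2)%N by [].
  rewrite s1 s2 in hc *.
  have h6 := leq_mul2r 6 ('C(p.+3, 3)) (N + k * p.+1); rewrite hc orbT e6 in h6.
  move: h6; rewrite mulnDl.
  set C := (p.+3 * p.+2 * p.+1)%N; set K := (k * p.+1)%N.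
  have -> : (2 * p.+3 * p.+2 * p.+1 = 2 * C)%N by rewrite /C !mulnA.
  have -> : (12 * k * p.+1 = 12 * K)%N by rewrite /K mulnA.
  lia.
have cpos : (0 : R) < (p.+3 - 2)%:R by rewrite (_ : (p.+3 - 2 = p.+1)%N) // ltr0Sn.
apply: aux => //.
by rewrite -!natrM -natrD ler_nat.
Qed.

Lemma k_split n (col : {set 'I_n} -> bool) (X1 X2 : {set 'I_n}) : X1 :&: X2 = finset.set0 ->
  (#|[set e in blue_edges col | e \subset X1]| + #|[set e in blue_edges col | e \subset X2]|
    <= blue_inside col X1 X2)%N.
Proof.
move=> hI; rewrite -cardsUI.
have -> : [set e in blue_edges col | e \subset X1] :&: [set e in blue_edges col | e \subset X2]
    = finset.set0.
  apply/finset.setP => e; rewrite !inE; apply/negbTE/negP.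
  case/andP => /andP[/andP[/eqP he _] h1] /andP[_ h2].
  by apply: (disj_sub hI _ h1 h2); rewrite he.
rewrite cards0 addn0 /blue_inside; apply: subset_leq_card; apply/fintype.subsetP => e.
by rewrite !inE; case/orP => /andP[-> ->]; rewrite ?orbT.
Qed.

Lemma nu_ge0 (R : realType) n (E : {set {set 'I_n}}) : 0 <= nu_star R E.
Proof.
have h0 : frac_tri_packing E (fun _ => (0 : R)).
  split => [T _|e _]; first by rewrite lexx ler01.
  by rewrite big1 // ler01.
have := nu_ge h0; rewrite /packing_value big1 //.
Qed.

Lemma main_ineq (R : realType) n (col : {set 'I_n} -> bool) (X1 X2 : {set 'I_n}) :
  X1 :&: X2 = finset.set0 ->
  pack R col <= (n * (n - 1))%:R / 4%:R ->
  (Hm #|X1| + Hm #|X2| <= n * (n - 1) + 12 * blue_inside col X1 X2)%N.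
Proof.
move=> hI hpack.
have hp := nu_ge (wgt_pack R col hI); rewrite wgt_val in hp.
have hb := nu_ge0 R (blue_edges col).
have p1 := part_bound R col X1; have p2 := part_bound R col X2.
have hk := k_split col hI.
rewrite -(ler_nat R) in hk.
rewrite -(ler_nat R).
move: hp hb p1 p2 hk hpack; rewrite /pack !natrD !natrM.
set v1 := (_ / _)%R; set v2 := (_ / _)%R.
move=> *; lra.
Qed.

Lemma c2 a b k : (a <= 2 -> 17 <= b -> 8*k <= a + b ->
  2*b*(b-1) <= (a+b)*(a+b-1) + 12*k -> False)%N.
Proof.
move=> ha hb hk h.
have e1 : (b*(b-1) = b*b - b)%N by rewrite mulnBr muln1.
have e2 : ((a+b)*(a+b-1) = (a+b)*(a+b) - (a+b))%N by rewrite mulnBr muln1.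
have h3 : (17 * b <= b * b)%N by rewrite leq_mul2r hb orbT.
have h4 : ((a+b)*(a+b) <= b*b + 4*b + 4)%N.
  have: (a + b <= b + 2)%N by lia.
  move=> hh; have := leq_mul hh hh; lia.
lia.
Qed.

Lemma c3 a d k : (3 <= a -> 19 <= 2*a + d -> 8*k <= 2*a + d ->
  2*a*(a-1) + 2*(a+d)*(a+d-1) <= (2*a+d)*(2*a+d-1) + 12*k -> 7 <= a /\ k + 4 <= a)%N.
Proof.
move=> ha hn hk h.
have e1 : (2*a*(a-1) = 2*(a*a) - 2*a)%N by rewrite -mulnA mulnBr muln1 mulnBr.
have e2 : (2*(a+d)*(a+d-1) = 2*(a*a) + 4*(a*d) + 2*(d*d) - 2*a - 2*d)%N.
  rewrite -mulnA mulnBr muln1 mulnDl !mulnDr; lia.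
have e3 : ((2*a+d)*(2*a+d-1) = 4*(a*a) + 4*(a*d) + (d*d) - 2*a - d)%N.
  rewrite mulnBr muln1 mulnDl !mulnDr; lia.
have hA : (3 * a <= a * a)%N by rewrite leq_mul2r ha orbT.
rewrite e1 e2 e3 in h.
have key : (d * d <= 2*a + d + 12*k)%N by lia.
have a7 : (7 <= a)%N.
  case: (ltnP a 7) => // h7; exfalso.
  have hd : (7 <= d)%N by lia.
  have : (7 * d <= d * d)%N by rewrite leq_mul2r hd orbT.
  lia.
split => //.
case: (ltnP a (k+4)) => // h7; exfalso.
have hd : (18 <= d)%N by lia.
have : (18 * d <= d * d)%N by rewrite leq_mul2r hd orbT.
lia.
Qed.

Lemma final_nat n a b k : (19 <= n -> a + b = n -> 8*k <= n ->
  Hm a + Hm b <= n*(n-1) + 12*k -> k + 4 <= a /\ 7 <= a)%N.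
Proof.
move=> hn hab hk; rewrite /Hm.
case: ifP => ha; case: ifP => hb h.
- case: (leqP a b) => hab'.
    have [d hd] : exists d, b = (a + d)%N by exists (b - a)%N; lia.
    subst b n.
    have := c3 a d k ha.
    rewrite (_ : (a + (a + d) = 2 * a + d)%N) in h hk hn *; last by lia.
    by move=> /(_ hn hk h) [? ?].
  have [d hd] : exists d, a = (b + d)%N by exists (a - b)%N; lia.
  subst a n.
  have := c3 b d k hb.
  rewrite (_ : ((b + d) + b = 2 * b + d)%N) in h hk hn *; last by lia.
  rewrite addnC in h.
  move=> /(_ hn hk h) [? ?]; lia.
- move/negbT: hb => hb; exfalso; apply: (c2 b a k); try lia.
- move/negbT: ha => ha; exfalso; apply: (c2 a b k); try lia.
- move/negbT: ha => ha; move/negbT: hb => hb; exfalso; lia.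
Qed.

Unset Implicit Arguments.

Theorem proposition4p1 (R : realType) (n : nat) (col : {set 'I_n} -> bool)
    (X1 X2 : {set 'I_n}) :
  (19 <= n)%N ->
  pack R col <= (n * (n - 1))%:R / 4%:R ->
  X1 != finset.set0 -> X2 != finset.set0 ->
  X1 :&: X2 = finset.set0 -> X1 :|: X2 = [set: 'I_n] ->
  (8 * blue_inside col X1 X2 <= n)%N ->
  ((blue_inside col X1 X2 + 4 <= #|X1|)%N /\ (blue_inside col X1 X2 + 4 <= #|X2|)%N) /\
  ((7 <= #|X1|)%N /\ (7 <= #|X2|)%N).
Proof.
move=> hn hpack _ _ hI hU hk.
have hcard : (#|X1| + #|X2| = n)%N.
  by rewrite -cardsUI hI cards0 addn0 hU cardsT card_ord.
have hm := @main_ineq R n col X1 X2 hI hpack.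
have [a1 a2] := @final_nat n _ _ _ hn hcard hk hm.
have hcard' : (#|X2| + #|X1| = n)%N by rewrite addnC.
have hm' : (Hm #|X2| + Hm #|X1| <= n * (n - 1) + 12 * blue_inside col X1 X2)%N by rewrite addnC.
have [b1 b2] := @final_nat n _ _ _ hn hcard' hk hm'.
by split; split.
Qed.
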